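(* Let $\mathcal{I}$ be a proper admissible ideal on $\omega$ and $X$ a topological space. If ONE does not have a winning strategy in the $\mathcal{I}$-Hurewicz game $\mathcal{I}H(X)$, then $X$ satisfies $S_{fin}(\Lambda, \mathcal{I}\text{-}\mathcal{O}^{gp})$.
   Context: The game $\mathcal{I}H(X)$: in round $n\in\omega$ ONE chooses an open cover $\mathcal{U}_n$ of $X$ and TWO chooses a finite $\mathcal{V}_n\subseteq\mathcal{U}_n$; TWO wins if for each $x\in X$, $\{n : x\notin\bigcup\mathcal{V}_n\}\in\mathcal{I}$, otherwise ONE wins. $\Lambda$ denotes the collection of large covers of $X$ (open covers such that each point of $X$ belongs to infinitely many members). An open cover $\mathcal{U}$ is $\mathcal{I}$-groupable if $\mathcal{U}=\bigcup_n\mathcal{U}_n$ with the $\mathcal{U}_n$ finite, pairwise disjoint, and for each $x$, $\{n : x\notin\bigcup\mathcal{U}_n\}\in\mathcal{I}$; $\mathcal{I}\text{-}\mathcal{O}^{gp}$ is the collection of such covers. $S_{fin}(\Lambda,\mathcal{I}\text{-}\mathcal{O}^{gp})$: for each sequence $\langle\mathcal{U}_n\rangle$ of large covers there are finite $\mathcal{V}_n\subseteq\mathcal{U}_n$ with $\bigcup_n\mathcal{V}_n\in\mathcal{I}\text{-}\mathcal{O}^{gp}$. *)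

(* Defs.v *)
From HB Require Import structures.
From mathcomp Require Import all_boot all_classical all_reals all_analysis.
Set Implicit Arguments. Unset Strict Implicit. Unset Printing Implicit Defensive.
Local Open Scope classical_set_scope.

Definition is_ideal (I : set (set nat)) : Prop :=
  I set0 /\
  (forall A B : set nat, B `<=` A -> I A -> I B) /\
  (forall A B : set nat, I A -> I B -> I (A `|` B)).

Definition proper_ideal (I : set (set nat)) : Prop := is_ideal I /\ ~ I setT.

Definition admissible_ideal (I : set (set nat)) : Prop :=
  forall A : set nat, finite_set A -> I A.

Definition open_cover {X : topologicalType} (U : set (set X)) : Prop :=
  (forall V, U V -> open V) /\ (forall x : X, exists2 V, U V & V x).

Definition large_cover {X : topologicalType} (U : set (set X)) : Prop :=
  open_cover U /\ (forall x : X, ~ finite_set [set V | U V /\ V x]).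

Definition I_groupable {X : topologicalType} (I : set (set nat))
    (U : set (set X)) : Prop :=
  open_cover U /\
  exists Us : nat -> set (set X),
    U = \bigcup_n Us n /\
    (forall n, finite_set (Us n)) /\
    (forall m n, m <> n -> Us m `&` Us n = set0) /\
    (forall x : X, I [set n | ~ (\bigcup_(V in Us n) V) x]).

Definition Sfin_Lambda_IOgp (X : topologicalType) (I : set (set nat)) : Prop :=
  forall Us : nat -> set (set X), (forall n, large_cover (Us n)) ->
  exists Vs : nat -> set (set X),
    (forall n, finite_set (Vs n) /\ Vs n `<=` Us n) /\
    I_groupable I (\bigcup_n Vs n).

(* The game I H(X).  A strategy for ONE assigns to each finite sequence of
   TWO's previous moves (V_0, ..., V_{n-1}) ONE's next move U_n, which must
   be an open cover. *)
Definition ONE_strategy (X : topologicalType) :=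
  seq (set (set X)) -> set (set X).

Definition legal_ONE_strategy {X : topologicalType} (sigma : ONE_strategy X) :=
  forall s, open_cover (sigma s).

Definition play_by {X : topologicalType} (sigma : ONE_strategy X)
    (Vs : nat -> set (set X)) : Prop :=
  forall n, finite_set (Vs n) /\ Vs n `<=` sigma (mkseq Vs n).

Definition TWO_wins {X : topologicalType} (I : set (set nat))
    (Vs : nat -> set (set X)) : Prop :=
  forall x : X, I [set n | ~ (\bigcup_(V in Vs n) V) x].

Definition ONE_winning_strategy (X : topologicalType) (I : set (set nat))
    (sigma : ONE_strategy X) : Prop :=
  legal_ONE_strategy sigma /\
  forall Vs, play_by sigma Vs -> ~ TWO_wins I Vs.

Definition ONE_has_winning_strategy_IH (X : topologicalType)
    (I : set (set nat)) : Prop :=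
  exists sigma : ONE_strategy X, ONE_winning_strategy I sigma.

(* Main.v *)
Require Import Defs.
From mathcomp Require Import all_boot all_classical all_reals all_analysis.
Local Open Scope classical_set_scope.

Definition strat (X : topologicalType) (Us : nat -> set (set X)) : ONE_strategy X :=
  fun s => [set V | Us (size s) V /\
    ((forall i, (i < size s)%N -> finite_set (nth set0 s i)) ->
     forall i, (i < size s)%N -> ~ nth set0 s i V)].

Lemma strat_legal (X : topologicalType) (Us : nat -> set (set X)) :
  (forall n, large_cover (Us n)) -> legal_ONE_strategy (@strat X Us).
Proof.
move=> HL s; have [[Hop Hcov] Hinf] := HL (size s); split.
  by move=> V [/Hop].
move=> x.
have [P|nP] := pselect (forall i, (i < size s)%N -> finite_set (nth set0 s i)).
- have FR : finite_set (\bigcup_(i in `I_(size s)) nth set0 s i).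
    by apply: bigcup_finite => // i; apply: P.
  apply: contrapT => Hno; apply: (Hinf x).
  apply: sub_finite_set FR => V [UV Vx].
  apply: contrapT => HnR; apply: Hno; exists V => //; split => // _ i Hi HV.
  by apply: HnR; exists i.
- have [V UV Vx] := Hcov x; exists V => //; split => // P; by exfalso; apply: nP.
Qed.

Theorem mainTheorem2 (I : set (set nat)) (X : topologicalType) :
  proper_ideal I -> admissible_ideal I ->
  ~ ONE_has_winning_strategy_IH X I ->
  Sfin_Lambda_IOgp X I.
Proof.
move=> [HI HT] _ Hno Us HL.
have [Vs [Hp Hw]] : exists Vs, play_by (@strat X Us) Vs /\ TWO_wins I Vs.
  apply: contrapT => H; apply: Hno; exists (@strat X Us); split.
    exact: strat_legal.
  by move=> Vs Hp Hw; apply: H; exists Vs.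
have HVU : forall n, Vs n `<=` Us n.
  move=> n V /((Hp n).2) [].
  by rewrite size_mkseq.
exists Vs; split.
  by move=> n; split; [exact: (Hp n).1 | exact: HVU].
split; last first.
  exists Vs; split => //; split; first by move=> n; exact: (Hp n).1.
  split => //.
  have key : forall m n, (m < n)%N -> Vs m `&` Vs n = set0.
    move=> m n Hmn; apply/seteqP; split => V // [Vm Vn].
    have [_ H] := (Hp n).2 V Vn.
    rewrite size_mkseq in H.
    exfalso; apply: (H _ m Hmn).
      by move=> i Hi; rewrite nth_mkseq //; exact: (Hp i).1.
    by rewrite nth_mkseq.
  move=> m n Hmn; have [H|H] : (m < n)%N \/ (n < m)%N.
    by move/eqP: Hmn; rewrite neq_ltn => /orP.
  - exact: key.
  - by rewrite setIC; apply: key.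
split.
  move=> V [n _ /HVU UV]; have [[Hop _] _] := HL n; exact: Hop.
move=> x; apply: contrapT => Hx; apply: HT.
suff -> : [set: nat] = [set n | ~ (\bigcup_(V in Vs n) V) x] by exact: Hw.
apply/seteqP; split => n // _ [V Vn Vx]; apply: Hx; exists V => //; by exists n.
Qed.
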